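(* Let $\gamma>0$, $A:=K+\gamma M$, $A^{\rm aux}:=G^TAJ^{\rm grad}_{\varepsilon,\bm\beta}$, and let $S^{\rm aux}$ be a translation-invariant node operator with $S^{\rm aux}\varphi(\bm\theta)_N=s(\bm\theta)\varphi(\bm\theta)_N$. Fix $\bm\theta\in[-\pi/2,3\pi/2)^2\setminus\{(0,0)\}$. Then $A^{\rm aux}$ acts on $\mathrm{span}\{\varphi(\bm\theta)_N\}$ as multiplication by the nonzero number $\tfrac{2\gamma}{3}D(\bm\theta)$, and the operator $S^{\rm kc}:=I-J^{\rm grad}_{\varepsilon,\bm\beta}(I-S^{\rm aux})(A^{\rm aux})^{-1}G^TA$, restricted to $F_E(\bm\theta)$ (with $(A^{\rm aux})^{-1}$ the inverse of $A^{\rm aux}$ on $\mathrm{span}\{\varphi(\bm\theta)_N\}$), satisfies $$S^{\rm kc}\psi_J(\bm\theta)_E=s(\bm\theta)\psi_J(\bm\theta)_E,\qquad S^{\rm kc}\psi_s(\bm\theta)_E=\frac{2(s(\bm\theta)-1)s_1s_2(\tilde c_2-\tilde c_1)}{D(\bm\theta)}\psi_J(\bm\theta)_E+\psi_s(\bm\theta)_E,$$ where $D(\bm\theta)=(2+\tilde c_2)s_1^2\sigma_1+(2+\tilde c_1)s_2^2\sigma_2-\tfrac{i}{2}\tilde s_1b_1(2+\tilde c_2)-\tfrac{i}{2}\tilde s_2b_2(2+\tilde c_1)$.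
   Context: Fix constants $\varepsilon>0$, $\bm{\beta}=(\beta_1,\beta_2)\in\mathbb{R}^2$, $h>0$, and set $b_j:=\beta_j h$. The Bernoulli function is $B_\varepsilon(s):=\varepsilon\big/\int_0^1 e^{sx/\varepsilon}\,dx$. Write $\sigma_j:=B_\varepsilon(b_j)+B_\varepsilon(-b_j)$, $s_j=\sin(\theta_j/2)$, $\tilde s_j=\sin\theta_j$, $\tilde c_j=\cos\theta_j$. Index sets: nodes $N=\mathbb{Z}^2$, horizontal edges $E_1=(\mathbb{Z}+\frac12)\times\mathbb{Z}$, vertical edges $E_2=\mathbb{Z}\times(\mathbb{Z}+\frac12)$, $E=E_1\cup E_2$, faces $F=(\mathbb{Z}+\frac12)^2$; grid functions are complex-valued functions on these sets; $e_1=(1,0)$, $e_2=(0,1)$. $J^{\rm grad}_{\varepsilon,\bm\beta}$: $(J^{\rm grad}_{\varepsilon,\bm\beta}f)_{\bm k}=-B_\varepsilon(b_j)f_{\bm k-e_j/2}+B_\varepsilon(-b_j)f_{\bm k+e_j/2}$ for $\bm k\in E_j$. $G^T$: $(G^Tg)_{\bm n}=\sum_{j=1}^2\big(g_{\bm n-e_j/2}-g_{\bm n+e_j/2}\big)$. $C^T$: $(C^Tf)_{\bm k}=f_{\bm k+e_2/2}-f_{\bm k-e_2/2}$ for $\bm k\in E_1$, $(C^Tf)_{\bm k}=f_{\bm k-e_1/2}-f_{\bm k+e_1/2}$ for $\bm k\in E_2$. The edge operator $K$ is defined, writing $B=B_\varepsilon$, by: for $\bm k\in E_1$, $h^2(Kf)_{\bm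 k}=\sigma_2f_{\bm k}-B(-b_2)f_{\bm k+e_2}-B(b_2)f_{\bm k-e_2}-B(b_1)f_{\bm k+(-\frac12,\frac12)}+B(-b_1)f_{\bm k+(\frac12,\frac12)}+B(b_1)f_{\bm k+(-\frac12,-\frac12)}-B(-b_1)f_{\bm k+(\frac12,-\frac12)}$; for $\bm k\in E_2$, $h^2(Kf)_{\bm k}=\sigma_1f_{\bm k}-B(b_1)f_{\bm k-e_1}-B(-b_1)f_{\bm k+e_1}-B(-b_2)f_{\bm k+(-\frac12,\frac12)}+B(-b_2)f_{\bm k+(\frac12,\frac12)}+B(b_2)f_{\bm k+(-\frac12,-\frac12)}-B(b_2)f_{\bm k+(\frac12,-\frac12)}$. The edge mass operator $M$: $(Mf)_{\bm k}=\frac23f_{\bm k}+\frac16(f_{\bm k+e_2}+f_{\bm k-e_2})$ for $\bm k\in E_1$, and $(Mf)_{\bm k}=\frac23f_{\bm k}+\frac16(f_{\bm k+e_1}+f_{\bm k-e_1})$ for $\bm k\in E_2$. Fourier modes: $\varphi(\bm\theta)_S(\bm k):=e^{i\bm\theta\cdot\bm k}$ for $\bm k\in S\in\{N,E,F\}$; $\varphi_j(\bm\theta)_E:=\chi_{E_j}\varphi(\bm\theta)_E$; $F_E(\bm\theta):=\mathrm{span}\{\varphi_1(\bm\theta)_E,\varphi_2(\bm\theta)_E\}$; $\psi_J(\bm\theta)_E:=J^{\rm grad}_{\varepsilon,\bm\beta}\varphi(\bm\theta)_N$, $\psi_s(\bm\theta)_E:=C^T\varphi(\bm\theta)_F$.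 *)

(* Defs.v *)
From Stdlib Require Import Reals ZArith Lra.
From Coquelicot Require Import Coquelicot.

Open Scope R_scope.

Definition Bern (eps s : R) : R := eps / RInt (fun x => exp (s * x / eps)) 0 1.

(** Grid points in DOUBLED coordinates: the point (x,y) in (1/2 Z)^2 is
    encoded as (2x,2y) in Z^2.  Hence
      nodes N  = (even,even), horizontal edges E1 = (odd,even),
      vertical edges E2 = (even,odd), faces F = (odd,odd).
    A shift by e_j/2 is a shift by 1 in coordinate j, a shift by e_j is 2. *)
Definition pt := (Z * Z)%type.

(** Grid functions: complex valued functions on Z^2 (doubled coordinates);
    a grid function on a set S in {N,E,F} is one vanishing off S.  All the
    operators below produce functions vanishing off their target set. *)
Definition grid := pt -> C.

Definition isN  (p : pt) : bool := Z.even (fst p) && Z.even (snd p).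
Definition isE1 (p : pt) : bool := Z.odd (fst p) && Z.even (snd p).
Definition isE2 (p : pt) : bool := Z.even (fst p) && Z.odd (snd p).
Definition isE  (p : pt) : bool := isE1 p || isE2 p.
Definition isF  (p : pt) : bool := Z.odd (fst p) && Z.odd (snd p).

Definition shift (p : pt) (a b : Z) : pt := (fst p + a, snd p + b)%Z.

Definition cis (t : R) : C := (cos t, sin t).

(** Fourier mode phi(theta)_S(k) = e^{i theta . k} for k in S (0 elsewhere);
    the actual coordinates of the doubled point p are p/2. *)
Definition phi (S : pt -> bool) (th1 th2 : R) : grid :=
  fun p => if S p then cis (th1 * (IZR (fst p) / 2) + th2 * (IZR (snd p) / 2))
           else 0%C.

Definition phiN := phi isN.
Definition phiE := phi isE.
Definition phiF := phi isF.
Definition phi1E := phi isE1.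
Definition phi2E := phi isE2.

Section Ops.
Variables (eps beta1 beta2 h gamma : R).

Let b1 := beta1 * h.
Let b2 := beta2 * h.
Let B := Bern eps.
Definition sigma1 := Bern eps (beta1 * h) + Bern eps (- (beta1 * h)).
Definition sigma2 := Bern eps (beta2 * h) + Bern eps (- (beta2 * h)).

Definition Jgrad (f : grid) : grid := fun k =>
  if isE1 k then (- RtoC (B b1) * f (shift k (-1) 0) + RtoC (B (- b1)) * f (shift k 1 0))%C
  else if isE2 k then (- RtoC (B b2) * f (shift k 0 (-1)) + RtoC (B (- b2)) * f (shift k 0 1))%C
  else 0%C.

Definition GT (g : grid) : grid := fun n =>
  if isN n then
    ((g (shift n (-1) 0) - g (shift n 1 0)) + (g (shift n 0 (-1)) - g (shift n 0 1)))%C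
  else 0%C.

Definition CT (f : grid) : grid := fun k =>
  if isE1 k then (f (shift k 0 1) - f (shift k 0 (-1)))%C
  else if isE2 k then (f (shift k (-1) 0) - f (shift k 1 0))%C
  else 0%C.

Definition Kop (f : grid) : grid := fun k =>
  if isE1 k then
    (/ RtoC (h ^ 2) *
     (RtoC sigma2 * f k - RtoC (B (- b2)) * f (shift k 0 2) - RtoC (B b2) * f (shift k 0 (-2))
      - RtoC (B b1) * f (shift k (-1) 1) + RtoC (B (- b1)) * f (shift k 1 1)
      + RtoC (B b1) * f (shift k (-1) (-1)) - RtoC (B (- b1)) * f (shift k 1 (-1))))%C
  else if isE2 k then
    (/ RtoC (h ^ 2) *
     (RtoC sigma1 * f k - RtoC (B b1) * f (shift k (-2) 0) - RtoC (B (- b1)) * f (shift k 2 0)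
      - RtoC (B (- b2)) * f (shift k (-1) 1) + RtoC (B (- b2)) * f (shift k 1 1)
      + RtoC (B b2) * f (shift k (-1) (-1)) - RtoC (B b2) * f (shift k 1 (-1))))%C
  else 0%C.

Definition Mop (f : grid) : grid := fun k =>
  if isE1 k then (RtoC (2/3) * f k + RtoC (1/6) * (f (shift k 0 2) + f (shift k 0 (-2))))%C
  else if isE2 k then (RtoC (2/3) * f k + RtoC (1/6) * (f (shift k 2 0) + f (shift k (-2) 0)))%C
  else 0%C.

Definition Aop (f : grid) : grid := fun k => (Kop f k + RtoC gamma * Mop f k)%C.

Definition Aaux (f : grid) : grid := GT (Aop (Jgrad f)).

Definition psiJ (th1 th2 : R) : grid := Jgrad (phiN th1 th2).
Definition psis (th1 th2 : R) : grid := CT (phiF th1 th2).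

Definition Dsym (th1 th2 : R) : C :=
  let s1 := sin (th1 / 2) in let s2 := sin (th2 / 2) in
  let ts1 := sin th1 in let ts2 := sin th2 in
  let tc1 := cos th1 in let tc2 := cos th2 in
  (RtoC ((2 + tc2) * s1 ^ 2 * sigma1 + (2 + tc1) * s2 ^ 2 * sigma2)
   - Ci * RtoC (/ 2 * ts1 * b1 * (2 + tc2))
   - Ci * RtoC (/ 2 * ts2 * b2 * (2 + tc1)))%C.

(** S^kc applied to an edge function v, given w = (A^aux)^{-1} G^T A v :
    S^kc v = v - J^grad (I - S^aux) w. *)
Definition Skc_with (Saux : grid -> grid) (v w : grid) : grid :=
  fun k => (v k - Jgrad (fun n => w n - Saux w n) k)%C.

End Ops.

Definition translation_invariant_node_op (S : grid -> grid) : Prop :=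
  (forall f g p, S (fun q => f q + g q)%C p = (S f p + S g p)%C) /\
  (forall (c : C) f p, S (fun q => c * f q)%C p = (c * S f p)%C) /\
  (forall f (a b : Z) p,
      S (fun q => f (shift q (2 * a) (2 * b))) p = S f (shift p (2 * a) (2 * b))).

Definition in_span_phiN (th1 th2 : R) (w : grid) : Prop :=
  exists c : C, forall p, w p = (c * phiN th1 th2 p)%C.

(* Main.v *)
Require Import Defs.
From Stdlib Require Import Reals ZArith Lra FunctionalExtensionality.
From Coquelicot Require Import Coquelicot.
Open Scope R_scope.


Lemma RInt_exp_lin (eps s : R) : 0 < eps -> s <> 0 ->
  RInt (fun x => exp (s * x / eps)) 0 1 = eps / s * (exp (s / eps) - 1).
Proof.
  intros He Hs.
  apply is_RInt_unique.
  assert (H := is_RInt_derive (fun x => eps / s * exp (s * x / eps))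
                              (fun x => exp (s * x / eps)) 0 1).
  replace (eps / s * (exp (s / eps) - 1)) with
      (minus (eps / s * exp (s * 1 / eps)) (eps / s * exp (s * 0 / eps))).
  - apply H.
    + intros x _. auto_derive; [auto|]. unfold Rdiv. field. split; (assumption || lra).
    + intros x _. apply continuous_comp. 2: apply continuous_exp.
      apply (continuous_scal_r (s / eps) (fun x => x)) || idtac.
      apply continuity_pt_filterlim.
      apply derivable_continuous_pt. auto_derive. auto.
  - unfold minus, plus, opp; simpl. rewrite Rmult_0_r, Rmult_1_r.
    replace (0 / eps) with 0 by (field; lra). rewrite exp_0. ring.
Qed.

Lemma Bern_formula eps s : 0 < eps -> s <> 0 -> Bern eps s = s / (exp (s / eps) - 1).
Proof.
  intros He Hs. unfold Bern. rewrite RInt_exp_lin; auto.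
  assert (exp (s / eps) <> 1).
  { intro E. apply Hs. rewrite <- exp_0 in E. apply exp_inv in E.
    apply (f_equal (fun t => t * eps)) in E. field_simplify in E; lra. }
  field. split; [lra|]. split; [|lra]. auto.
Qed.

Lemma Bern_0 eps : 0 < eps -> Bern eps 0 = eps.
Proof.
  intros He. unfold Bern.
  rewrite (RInt_ext _ (fun _ => 1)).
  2:{ intros. unfold Rdiv. rewrite Rmult_0_l, Rmult_0_l, exp_0. reflexivity. }
  rewrite RInt_const. unfold scal; simpl. unfold mult; simpl. field.
Qed.

Lemma Bern_pos eps s : 0 < eps -> 0 < Bern eps s.
Proof.
  intros He. destruct (Req_dec s 0) as [->|Hs]. rewrite Bern_0; auto.
  rewrite Bern_formula; auto.
  destruct (Rlt_or_le 0 s).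
  - assert (1 < exp (s/eps)). { rewrite <- exp_0. apply exp_increasing.
      apply Rdiv_lt_0_compat; auto. }
    apply Rdiv_lt_0_compat; lra.
  - assert (exp (s/eps) < 1). { rewrite <- exp_0. apply exp_increasing.
      unfold Rdiv. apply Rmult_neg_pos. lra. apply Rinv_0_lt_compat; auto. }
    unfold Rdiv. apply Rmult_neg_neg. lra. apply Rinv_lt_0_compat. lra.
Qed.

Lemma Bern_neg eps s : 0 < eps -> Bern eps (- s) = Bern eps s + s.
Proof.
  intros He. destruct (Req_dec s 0) as [->|Hs].
  rewrite Ropp_0, Bern_0; auto; ring.
  rewrite !Bern_formula; auto. 2: lra.
  replace (- s / eps) with (- (s / eps)) by (field; lra).
  rewrite exp_Ropp.
  assert (exp (s / eps) <> 1).
  { intro E. apply Hs. rewrite <- exp_0 in E. apply exp_inv in E.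
    apply (f_equal (fun t => t * eps)) in E. field_simplify in E; lra. }
  assert (0 < exp (s/eps)) by apply exp_pos.
  field. split; [lra|]. split; lra.
Qed.


Lemma cis_add a b : cis (a + b) = (cis a * cis b)%C.
Proof. unfold cis, Cmult; simpl. rewrite cos_plus, sin_plus. f_equal; ring. Qed.

Lemma cis_nz a : cis a <> 0%C.
Proof. intro E. unfold cis in E. injection E as E1 E2.
  assert (H := sin2_cos2 a). unfold Rsqr in H. rewrite E1, E2 in H. lra. Qed.

Lemma cis_opp a : cis (- a) = (/ cis a)%C.
Proof.
  unfold cis, Cinv; simpl. rewrite cos_neg, sin_neg.
  assert (H := sin2_cos2 a). unfold Rsqr in H.
  replace (cos a * (cos a * 1) + sin a * (sin a * 1)) with 1 by lra.
  f_equal; field.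
Qed.

Lemma cis_shift th1 th2 x y a b :
  cis (th1 * (IZR (x + a) / 2) + th2 * (IZR (y + b) / 2)) =
  (cis (th1 * (IZR x / 2) + th2 * (IZR y / 2)) * cis (th1 * (IZR a / 2)) * cis (th2 * (IZR b / 2)))%C.
Proof.
  rewrite <- !cis_add. f_equal. rewrite !plus_IZR. field.
Qed.

Lemma cisL0 t : cis (t * (IZR 0 / 2)) = 1%C.
Proof. replace (t * (IZR 0 / 2)) with 0 by (simpl; field). unfold cis. rewrite cos_0, sin_0. reflexivity. Qed.
Lemma cisL1 t : cis (t * (IZR 1 / 2)) = cis (t/2).
Proof. f_equal. simpl. field. Qed.
Lemma cisLm1 t : cis (t * (IZR (-1) / 2)) = (/ cis (t/2))%C.
Proof. rewrite <- cis_opp. f_equal. simpl. field. Qed.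
Lemma cisL2 t : cis (t * (IZR 2 / 2)) = (cis (t/2) * cis (t/2))%C.
Proof. rewrite <- cis_add. f_equal. simpl. field. Qed.
Lemma cisLm2 t : cis (t * (IZR (-2) / 2)) = (/ (cis (t/2) * cis (t/2)))%C.
Proof. rewrite <- cis_add, <- cis_opp. f_equal. simpl. field. Qed.

Ltac norm_par :=
  unfold isN, isE1, isE2, isE, isF, Defs.shift in *; cbn [fst snd] in *;
  rewrite ?Z.even_add, ?Z.odd_add; cbn [Z.even Z.odd];
  rewrite <- ?Z.negb_even.

Ltac cis_simp :=
  rewrite ?cis_shift, ?cisL0, ?cisL1, ?cisLm1, ?cisL2, ?cisLm2.

Ltac grid_case x y := destruct (Z.even x), (Z.even y);
  cbn [negb andb orb xorb Bool.eqb]; cis_simp.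

Ltac cfield := field; repeat split; try apply cis_nz.

Section Modes.
Variables (eps beta1 beta2 h gamma th1 th2 : R).
Hypothesis Hh : h <> 0.
Let z1 := cis (th1/2).
Let z2 := cis (th2/2).
Let B1 := RtoC (Bern eps (beta1*h)).
Let B1m := RtoC (Bern eps (-(beta1*h))).
Let B2 := RtoC (Bern eps (beta2*h)).
Let B2m := RtoC (Bern eps (-(beta2*h))).
Definition j1c := (- B1 * / z1 + B1m * z1)%C.
Definition j2c := (- B2 * / z2 + B2m * z2)%C.

Lemma J_mode f c : (forall q, f q = c * phiN th1 th2 q)%C -> forall p,
  Jgrad eps beta1 beta2 h f p = (c * j1c * phi1E th1 th2 p + c * j2c * phi2E th1 th2 p)%C.
Proof.
  intros Hf [x y]. unfold Jgrad. rewrite !Hf. unfold phiN, phi1E, phi2E, phi, j1c, j2c.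
  fold z1 z2 B1 B1m B2 B2m. norm_par. grid_case x y; fold z1 z2; cfield.
Qed.

Definition k11 := (/ RtoC (h ^ 2) * (RtoC (sigma2 eps beta2 h) - B2m * (z2 * z2) - B2 * / (z2 * z2)))%C.
Definition k12 := (/ RtoC (h ^ 2) * (- B1 * (/ z1 * z2) + B1m * (z1 * z2) + B1 * (/ z1 * / z2) - B1m * (z1 * / z2)))%C.
Definition k22 := (/ RtoC (h ^ 2) * (RtoC (sigma1 eps beta1 h) - B1 * / (z1 * z1) - B1m * (z1 * z1)))%C.
Definition k21 := (/ RtoC (h ^ 2) * (- B2m * (/ z1 * z2) + B2m * (z1 * z2) + B2 * (/ z1 * / z2) - B2 * (z1 * / z2)))%C.
Definition m11 := (RtoC (2/3) + RtoC (1/6) * (z2 * z2 + / (z2 * z2)))%C.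
Definition m22 := (RtoC (2/3) + RtoC (1/6) * (z1 * z1 + / (z1 * z1)))%C.

Lemma K_mode f c1 c2 : (forall q, f q = c1 * phi1E th1 th2 q + c2 * phi2E th1 th2 q)%C -> forall p,
  Kop eps beta1 beta2 h f p = ((k11 * c1 + k12 * c2) * phi1E th1 th2 p + (k21 * c1 + k22 * c2) * phi2E th1 th2 p)%C.
Proof.
  intros Hf [x y]. unfold Kop. rewrite !Hf. unfold phiN, phi1E, phi2E, phi, k11, k12, k21, k22.
  fold z1 z2 B1 B1m B2 B2m. norm_par. grid_case x y; fold z1 z2; cfield; intro E; apply RtoC_inj in E; revert E; apply pow_nonzero; exact Hh.
Qed.

Lemma M_mode f c1 c2 : (forall q, f q = c1 * phi1E th1 th2 q + c2 * phi2E th1 th2 q)%C -> forall p,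
  Mop f p = (m11 * c1 * phi1E th1 th2 p + m22 * c2 * phi2E th1 th2 p)%C.
Proof.
  intros Hf [x y]. unfold Mop. rewrite !Hf. unfold phiN, phi1E, phi2E, phi, m11, m22.
  norm_par. grid_case x y; fold z1 z2; cfield.
Qed.

Lemma G_mode f c1 c2 : (forall q, f q = c1 * phi1E th1 th2 q + c2 * phi2E th1 th2 q)%C -> forall p,
  GT f p = ((c1 * (/ z1 - z1) + c2 * (/ z2 - z2)) * phiN th1 th2 p)%C.
Proof.
  intros Hf [x y]. unfold GT. rewrite !Hf. unfold phiN, phi1E, phi2E, phi.
  norm_par. grid_case x y; fold z1 z2; cfield.
Qed.

Lemma C_mode p : CT (phiF th1 th2) p = ((z2 - / z2) * phi1E th1 th2 p + (/ z1 - z1) * phi2E th1 th2 p)%C.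
Proof.
  destruct p as [x y]. unfold CT. unfold phiF, phi1E, phi2E, phi.
  norm_par. grid_case x y; fold z1 z2; cfield.
Qed.


Lemma A_mode f c1 c2 : (forall q, f q = c1 * phi1E th1 th2 q + c2 * phi2E th1 th2 q)%C -> forall p,
  Aop eps beta1 beta2 h gamma f p =
  ((k11 * c1 + k12 * c2 + RtoC gamma * (m11 * c1)) * phi1E th1 th2 p +
   (k21 * c1 + k22 * c2 + RtoC gamma * (m22 * c2)) * phi2E th1 th2 p)%C.
Proof. intros Hf p. unfold Aop. rewrite (K_mode f c1 c2 Hf), (M_mode f c1 c2 Hf). ring. Qed.

Lemma Aaux_mode w c : (forall q, w q = c * phiN th1 th2 q)%C -> forall p,
  Aaux eps beta1 beta2 h gamma w p =
  (c * ((k11 * j1c + k12 * j2c + RtoC gamma * (m11 * j1c)) * (/ z1 - z1) +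
        (k21 * j1c + k22 * j2c + RtoC gamma * (m22 * j2c)) * (/ z2 - z2)) * phiN th1 th2 p)%C.
Proof.
  intros Hw p. unfold Aaux.
  rewrite (G_mode _ (c * k11 * j1c + c * k12 * j2c + RtoC gamma * (m11 * (c * j1c)))%C
                      (c * k21 * j1c + c * k22 * j2c + RtoC gamma * (m22 * (c * j2c)))%C).
  - fold z1 z2. ring.
  - intro q. rewrite (A_mode _ (c * j1c)%C (c * j2c)%C).
    + f_equal; f_equal; ring.
    + intro r. rewrite (J_mode _ c Hw). reflexivity.
Qed.
End Modes.


Lemma RtoC_Bneg eps s : 0 < eps -> RtoC (Bern eps (- s)) = (RtoC (Bern eps s) + RtoC s)%C.
Proof. intros. rewrite Bern_neg; auto. apply RtoC_plus. Qed.

Lemma cis_inv_eq a : (/ cis a)%C = (cos a, - sin a).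
Proof. rewrite <- cis_opp. unfold cis. rewrite cos_neg, sin_neg. reflexivity. Qed.

Lemma trig_ss a b : RtoC (sin a * sin b) = (- ((cis a - / cis a) * (cis b - / cis b)) / 4)%C.
Proof. rewrite !cis_inv_eq. unfold Cdiv, Cminus; unfold cis, Cplus, Copp, Cmult, Cinv, RtoC; simpl.
  f_equal; field. Qed.

Lemma trig_c t : RtoC (cos t) = ((cis (t/2) * cis (t/2) + / (cis (t/2) * cis (t/2))) / 2)%C.
Proof. rewrite <- cis_add. replace (t/2 + t/2) with t by field.
  rewrite !cis_inv_eq. unfold Cdiv, Cminus; unfold cis, Cplus, Copp, Cmult, Cinv, RtoC; simpl.
  f_equal; field. Qed.

Lemma trig_is t : (Ci * RtoC (sin t))%C = ((cis (t/2) * cis (t/2) - / (cis (t/2) * cis (t/2))) / 2)%C.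
Proof. rewrite <- cis_add. replace (t/2 + t/2) with t by field.
  rewrite !cis_inv_eq. unfold Cdiv, Cminus; unfold cis, Ci, Cplus, Copp, Cmult, Cinv, RtoC; simpl.
  f_equal; field. Qed.

Section Ident.
Variables (eps beta1 beta2 h gamma th1 th2 : R).
Hypothesis He : 0 < eps.
Hypothesis Hh : h <> 0.

Lemma Dsym_mid : Dsym eps beta1 beta2 h th1 th2 =
  (RtoC (2 + cos th2) * RtoC (sin (th1/2) * sin (th1/2)) * RtoC (sigma1 eps beta1 h)
 + RtoC (2 + cos th1) * RtoC (sin (th2/2) * sin (th2/2)) * RtoC (sigma2 eps beta2 h)
 - / 2 * (Ci * RtoC (sin th1)) * RtoC (beta1 * h) * RtoC (2 + cos th2)
 - / 2 * (Ci * RtoC (sin th2)) * RtoC (beta2 * h) * RtoC (2 + cos th1))%C.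
Proof.
  unfold Dsym. cbv zeta.
  unfold Cdiv, Cminus; unfold Ci, Cplus, Copp, Cmult, Cinv, RtoC; simpl.
  f_equal; field.
Qed.

Let z1 := cis (th1/2).
Let z2 := cis (th2/2).

Ltac to_atoms :=
  unfold sigma1, sigma2;
  rewrite ?RtoC_Bneg by exact He;
  rewrite ?trig_ss, ?trig_is, ?trig_c;
  rewrite ?RtoC_plus, ?RtoC_Bneg by exact He;
  rewrite ?trig_c;
  rewrite ?RtoC_div by lra.

Lemma I1 :
  let j1 := j1c eps beta1 h th1 in let j2 := j2c eps beta2 h th2 in
  let a1 := (k11 eps beta2 h th2 * j1 + k12 eps beta1 h th1 th2 * j2 + RtoC gamma * (m11 th2 * j1))%C in
  let a2 := (k21 eps beta2 h th1 th2 * j1 + k22 eps beta1 h th1 * j2 + RtoC gamma * (m22 th1 * j2))%C in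
  (a1 * (/ z1 - z1) + a2 * (/ z2 - z2))%C = (RtoC (2 * gamma / 3) * Dsym eps beta1 beta2 h th1 th2)%C.
Proof.
  cbv zeta. rewrite Dsym_mid. unfold j1c, j2c, k11, k12, k21, k22, m11, m22.
  fold z1 z2. to_atoms. fold z1 z2. rewrite (RtoC_mult 2 gamma).
  field. repeat split; try apply cis_nz.
  intro E; apply RtoC_inj in E; revert E; apply pow_nonzero; exact Hh.
Qed.

Lemma I2 :
  let c1 := (z2 - / z2)%C in let c2 := (/ z1 - z1)%C in
  let a1 := (k11 eps beta2 h th2 * c1 + k12 eps beta1 h th1 th2 * c2 + RtoC gamma * (m11 th2 * c1))%C in
  let a2 := (k21 eps beta2 h th1 th2 * c1 + k22 eps beta1 h th1 * c2 + RtoC gamma * (m22 th1 * c2))%C in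
  (a1 * (/ z1 - z1) + a2 * (/ z2 - z2))%C =
  (RtoC (2 * gamma / 3) * (2 * RtoC (sin (th1 / 2) * sin (th2 / 2) * (cos th2 - cos th1))))%C.
Proof.
  cbv zeta. unfold k11, k12, k21, k22, m11, m22.
  rewrite (RtoC_mult (sin (th1 / 2) * sin (th2 / 2))), RtoC_minus.
  fold z1 z2. to_atoms. fold z1 z2. rewrite (RtoC_mult 2 gamma).
  field. repeat split; try apply cis_nz.
  intro E; apply RtoC_inj in E; revert E; apply pow_nonzero; exact Hh.
Qed.
End Ident.


Lemma sin_half_nz t : - PI / 2 <= t < 3 * PI / 2 -> t <> 0 -> sin (t / 2) <> 0.
Proof.
  intros [H1 H2] Ht. assert (HP := PI_RGT_0).
  destruct (Rlt_or_le 0 t).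
  - apply Rgt_not_eq, sin_gt_0; lra.
  - apply Rlt_not_eq, sin_lt_0_var; lra.
Qed.

Lemma Dsym_nz eps beta1 beta2 h th1 th2 : 0 < eps ->
  - PI / 2 <= th1 < 3 * PI / 2 -> - PI / 2 <= th2 < 3 * PI / 2 ->
  (th1, th2) <> (0, 0) -> Dsym eps beta1 beta2 h th1 th2 <> 0%C.
Proof.
  intros He R1 R2 Hne E.
  apply (f_equal fst) in E. unfold Dsym in E. cbv zeta in E.
  unfold Cminus, Cplus, Copp, Cmult, Ci, RtoC in E. simpl in E.
  assert (S1 : 0 < sigma1 eps beta1 h) by (unfold sigma1; pose proof (Bern_pos eps (beta1*h) He); pose proof (Bern_pos eps (-(beta1*h)) He); lra).
  assert (S2 : 0 < sigma2 eps beta2 h) by (unfold sigma2; pose proof (Bern_pos eps (beta2*h) He); pose proof (Bern_pos eps (-(beta2*h)) He); lra).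
  assert (C1 : 1 <= 2 + cos th1) by (pose proof (COS_bound th1); lra).
  assert (C2 : 1 <= 2 + cos th2) by (pose proof (COS_bound th2); lra).
  assert (P : 0 < (2 + cos th2) * sin (th1/2) ^ 2 * sigma1 eps beta1 h +
                  (2 + cos th1) * sin (th2/2) ^ 2 * sigma2 eps beta2 h).
  { destruct (Req_dec th1 0) as [->|N1].
    - assert (N2 : th2 <> 0) by (intro; apply Hne; subst; reflexivity).
      pose proof (sin_half_nz _ R2 N2).
      assert (0 < sin (th2/2) ^ 2) by (apply pow2_gt_0; auto).
      assert (0 <= sin (0/2) ^ 2) by apply pow2_ge_0.
      assert (0 <= (2 + cos th2) * sin (0/2) ^ 2 * sigma1 eps beta1 h)
        by (apply Rmult_le_pos; [apply Rmult_le_pos|]; lra).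
      assert (0 < (2 + cos 0) * sin (th2/2) ^ 2 * sigma2 eps beta2 h)
        by (apply Rmult_lt_0_compat; [apply Rmult_lt_0_compat|]; lra).
      lra.
    - pose proof (sin_half_nz _ R1 N1).
      assert (0 < sin (th1/2) ^ 2) by (apply pow2_gt_0; auto).
      assert (0 <= sin (th2/2) ^ 2) by apply pow2_ge_0.
      assert (0 < (2 + cos th2) * sin (th1/2) ^ 2 * sigma1 eps beta1 h)
        by (apply Rmult_lt_0_compat; [apply Rmult_lt_0_compat|]; lra).
      assert (0 <= (2 + cos th1) * sin (th2/2) ^ 2 * sigma2 eps beta2 h)
        by (apply Rmult_le_pos; [apply Rmult_le_pos|]; lra).
      lra. }
  lra.
Qed.

Lemma phiN00 th1 th2 : phiN th1 th2 (0%Z, 0%Z) = 1%C.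
Proof.
  unfold phiN, phi, isN. cbn [fst snd Z.even andb].
  replace (th1 * (IZR 0 / 2) + th2 * (IZR 0 / 2)) with 0 by (simpl; field).
  unfold cis. rewrite cos_0, sin_0. reflexivity.
Qed.

Theorem mainTheorem5
  (eps beta1 beta2 h gamma : R) (Saux : grid -> grid) (s : R -> R -> C)
  (th1 th2 : R) :
  0 < eps -> 0 < h -> 0 < gamma ->
  translation_invariant_node_op Saux ->
  (forall t1 t2 p, Saux (phiN t1 t2) p = (s t1 t2 * phiN t1 t2 p)%C) ->
  - PI / 2 <= th1 < 3 * PI / 2 -> - PI / 2 <= th2 < 3 * PI / 2 ->
  (th1, th2) <> (0, 0) ->
  let D := Dsym eps beta1 beta2 h th1 th2 in
  let pJ := psiJ eps beta1 beta2 h th1 th2 in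
  let ps := psis th1 th2 in
  D <> 0%C /\
  (forall p, Aaux eps beta1 beta2 h gamma (phiN th1 th2) p
             = (RtoC (2 * gamma / 3) * D * phiN th1 th2 p)%C) /\
  (exists a1 a2 : C, forall p, pJ p = (a1 * phi1E th1 th2 p + a2 * phi2E th1 th2 p)%C) /\
  (exists a1 a2 : C, forall p, ps p = (a1 * phi1E th1 th2 p + a2 * phi2E th1 th2 p)%C) /\
  in_span_phiN th1 th2 (GT (Aop eps beta1 beta2 h gamma pJ)) /\
  in_span_phiN th1 th2 (GT (Aop eps beta1 beta2 h gamma ps)) /\
  (forall w, in_span_phiN th1 th2 w ->
     (forall p, Aaux eps beta1 beta2 h gamma w p = GT (Aop eps beta1 beta2 h gamma pJ) p) ->
     forall p, Skc_with eps beta1 beta2 h Saux pJ w p = (s th1 th2 * pJ p)%C) /\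
  (forall w, in_span_phiN th1 th2 w ->
     (forall p, Aaux eps beta1 beta2 h gamma w p = GT (Aop eps beta1 beta2 h gamma ps) p) ->
     forall p, Skc_with eps beta1 beta2 h Saux ps w p =
       (RtoC 2 * (s th1 th2 - 1) * RtoC (sin (th1 / 2) * sin (th2 / 2) * (cos th2 - cos th1))
          / D * pJ p + ps p)%C).
Proof.
  intros He Hh0 Hg [Hlin [Hsc Htr]] Hs R1 R2 Hne D pJ ps.
  assert (Hh : h <> 0) by lra.
  assert (HD : D <> 0%C) by (apply Dsym_nz; auto).
  set (R23 := RtoC (2 * gamma / 3)).
  assert (H23 : R23 <> 0%C).
  { unfold R23. intro E; apply RtoC_inj in E. lra. }
  set (g := (R23 * D)%C).
  set (RX := RtoC (sin (th1 / 2) * sin (th2 / 2) * (cos th2 - cos th1))).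
  set (gs := (R23 * (2 * RX))%C).
  pose proof (I1 eps beta1 beta2 h gamma th1 th2 He Hh) as EI1. cbv zeta in EI1.
  pose proof (I2 eps beta1 beta2 h gamma th1 th2 He Hh) as EI2. cbv zeta in EI2.
  set (j1 := j1c eps beta1 h th1) in *. set (j2 := j2c eps beta2 h th2) in *.
  assert (HAa : forall w c, (forall q, w q = c * phiN th1 th2 q)%C -> forall p,
     Aaux eps beta1 beta2 h gamma w p = (c * g * phiN th1 th2 p)%C).
  { intros w c Hw p. rewrite (Aaux_mode eps beta1 beta2 h gamma th1 th2 Hh w c Hw p).
    fold j1 j2. rewrite EI1. reflexivity. }
  assert (HAphi : forall p, Aaux eps beta1 beta2 h gamma (phiN th1 th2) p = (g * phiN th1 th2 p)%C).
  { intro p. rewrite (HAa _ 1%C) by (intro; ring). ring. }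
  assert (HGJ : forall p, GT (Aop eps beta1 beta2 h gamma pJ) p = (g * phiN th1 th2 p)%C).
  { intro p. exact (HAphi p). }
  assert (HJ : forall p, pJ p = (j1 * phi1E th1 th2 p + j2 * phi2E th1 th2 p)%C).
  { intro p. unfold pJ, psiJ.
    rewrite (J_mode eps beta1 beta2 h th1 th2 (phiN th1 th2) 1%C) by (intro; ring).
    fold j1 j2. ring. }
  assert (HS : forall p, ps p = ((cis (th2/2) - / cis (th2/2)) * phi1E th1 th2 p +
                                (/ cis (th1/2) - cis (th1/2)) * phi2E th1 th2 p)%C).
  { intro p. apply C_mode. }
  assert (HGs : forall p, GT (Aop eps beta1 beta2 h gamma ps) p = (gs * phiN th1 th2 p)%C).
  { intro p. rewrite (G_mode th1 th2 _ _ _ (A_mode eps beta1 beta2 h gamma th1 th2 Hh ps _ _ HS)).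
    fold j1 j2. rewrite EI2. reflexivity. }
  assert (HW : forall w c, (forall q, w q = c * phiN th1 th2 q)%C -> forall n,
            (w n - Saux w n = (c * (1 - s th1 th2)) * phiN th1 th2 n)%C).
  { intros w c Hw n.
    assert (E : w = fun q => (c * phiN th1 th2 q)%C) by (apply functional_extensionality; exact Hw).
    rewrite E. rewrite (Hsc c (phiN th1 th2) n), Hs. ring. }
  assert (Hcoef : forall w c G, (forall q, w q = c * phiN th1 th2 q)%C ->
            (forall p, Aaux eps beta1 beta2 h gamma w p = (G * phiN th1 th2 p)%C) ->
            (c * g = G)%C).
  { intros w c G Hw HG. pose proof (HG (0%Z, 0%Z)) as H.
    rewrite (HAa w c Hw), phiN00 in H. rewrite <- (Cmult_1_r (c * g)), <- (Cmult_1_r G). exact H. }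
  split; [exact HD|].
  split; [exact HAphi|].
  split; [exists j1, j2; exact HJ|].
  split; [eexists _, _; exact HS|].
  split; [exists g; exact HGJ|].
  split; [exists gs; exact HGs|].
  split.
  - intros w [c Hc] Hw p.
    assert (Hc1 : c = 1%C).
    { assert (E : (c * g = g)%C).
      { apply (Hcoef w c g Hc). intro q. rewrite Hw. apply HGJ. }
      assert (Hg0 : g <> 0%C) by (unfold g; apply Cmult_neq_0; auto).
      replace c with (c * g / g)%C by (field; exact Hg0). rewrite E. field. exact Hg0. }
    unfold Skc_with.
    rewrite (J_mode eps beta1 beta2 h th1 th2 _ (c * (1 - s th1 th2))%C (HW w c Hc)).
    fold j1 j2. rewrite !HJ. subst c. ring.
  - intros w [c Hc] Hw p.
    assert (Hc2 : c = (2 * RX / D)%C).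
    { assert (E : (c * g = gs)%C).
      { apply (Hcoef w c gs Hc). intro q. rewrite Hw. apply HGs. }
      replace c with (c * g / g)%C by (unfold g; field; split; auto). rewrite E.
      unfold gs, g. field. split; auto. }
    unfold Skc_with.
    rewrite (J_mode eps beta1 beta2 h th1 th2 _ (c * (1 - s th1 th2))%C (HW w c Hc)).
    fold j1 j2. rewrite !HJ. subst c. fold RX. field. auto.
Qed.
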